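(* Every cubic graph of tree-width at most 3 contains a triangle, a copy of $K_{2,3}$, or a copy of the domino as a subgraph.
   Context: All graphs are finite and simple; cubic means 3-regular. The domino is the $2\times 3$ grid graph: vertices $a_1,a_2,a_3,b_1,b_2,b_3$ and edges $a_1a_2,a_2a_3,b_1b_2,b_2b_3,a_1b_1,a_2b_2,a_3b_3$. *)

(* Defs.v *)
From mathcomp Require Import all_boot.
Set Implicit Arguments. Unset Strict Implicit. Unset Printing Implicit Defensive.

Definition simple_graph (T : finType) (e : rel T) : Prop :=
  symmetric e /\ irreflexive e.

Definition cubic (T : finType) (e : rel T) : Prop :=
  forall v : T, #|[set w | e v w]| = 3.

Definition is_tree (I : finType) (t : rel I) : Prop :=
  [/\ simple_graph t, 0 < #|I|,
      (forall i j : I, connect t i j) &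
      (forall c : seq I, uniq c -> 3 <= size c -> ~~ cycle t c)].

Definition tree_decomposition (T : finType) (e : rel T)
    (I : finType) (t : rel I) (B : I -> {set T}) : Prop :=
  [/\ is_tree t,
      (forall v : T, exists i : I, v \in B i),
      (forall u v : T, e u v -> exists i : I, (u \in B i) && (v \in B i)) &
      (forall (v : T) (i j : I), v \in B i -> v \in B j ->
         connect [rel x y | [&& t x y, v \in B x & v \in B y]] i j)].

(* Width of a decomposition is (max bag size) - 1; tree-width <= k iff
   some tree decomposition has all bags of size at most k+1. *)
Definition treewidth_le (T : finType) (e : rel T) (k : nat) : Prop :=
  exists (I : finType) (t : rel I) (B : I -> {set T}),
    tree_decomposition e t B /\ forall i : I, #|B i| <= k.+1.

Definition has_triangle (T : finType) (e : rel T) : Prop :=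
  exists a b c : T, [/\ uniq [:: a; b; c], e a b, e b c & e a c].

Definition has_K23 (T : finType) (e : rel T) : Prop :=
  exists x1 x2 y1 y2 y3 : T,
    uniq [:: x1; x2; y1; y2; y3] /\
    [/\ e x1 y1, e x1 y2 & e x1 y3] /\ [/\ e x2 y1, e x2 y2 & e x2 y3].

(* Domino = 2x3 grid: a1a2, a2a3, b1b2, b2b3, a1b1, a2b2, a3b3. *)
Definition has_domino (T : finType) (e : rel T) : Prop :=
  exists a1 a2 a3 b1 b2 b3 : T,
    uniq [:: a1; a2; a3; b1; b2; b3] /\
    [/\ e a1 a2, e a2 a3, e b1 b2 & e b2 b3] /\ [/\ e a1 b1, e a2 b2 & e a3 b3].

(* Main.v *)
Require Import Defs.
From mathcomp Require Import all_boot.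
From mathcomp Require Import zify.
From Stdlib Require Import Classical.
Set Implicit Arguments. Unset Strict Implicit. Unset Printing Implicit Defensive.

Lemma conn_ind (I : finType) (r : rel I) (P : I -> Prop) a :
  P a -> (forall x y, connect r a x -> P x -> r x y -> P y) ->
  forall x, connect r a x -> P x.
Proof.
move=> Pa step x /connectP [p pth ->].
elim/last_ind: p pth => [|p y IH] //.
rewrite rcons_path => /andP [pth ry]; rewrite last_rcons.
apply: step ry; last exact: IH.
by apply/connectP; exists p.
Qed.

Definition tminus (I : finType) (t : rel I) (a b : I) : rel I :=
  fun x y => t x y && ~~ (((x == a) && (y == b)) || ((x == b) && (y == a))).

Definition side (I : finType) (t : rel I) (i j : I) : {set I} :=
  [set k | connect (tminus t i j) i k].

Lemma side_notin (I : finType) (t : rel I) i j :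
  is_tree t -> t i j -> j \notin side t i j.
Proof.
case=> [[tsym tirr] _ _ acyc] tij; apply/negP; rewrite inE => /connectP [p pth lastj].
case: (shortenP pth) lastj => p' pth' up' _ lastj.
have pt : path t i p' by apply: sub_path pth' => x y /andP [].
have ij : i != j by apply/negP => /eqP E; rewrite E tirr in tij.
have sz : 3 <= size (i :: p').
  case: p' pth' up' pt lastj => [|y [|z p'']] /=.
  - by move=> _ _ _ E; rewrite E eqxx in ij.
  - move=> /andP [H _] _ _ E; rewrite -E /tminus eqxx /= in H.
    by rewrite E eqxx /= andbF in H.
  - by [].
apply: (negP (acyc (i :: p') up' sz)).
rewrite /cycle rcons_path pt /=.
by rewrite -lastj tsym.
Qed.

Lemma side_sub (I : finType) (t : rel I) j p k :
  is_tree t -> t j p -> t j k -> k != p -> side t k j \subset side t j p.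
Proof.
move=> tr tjp tjk kp.
have [[tsym tirr] _ _ _] := tr.
have jns : j \notin side t k j by apply: side_notin => //; rewrite tsym.
apply/subsetP => x; rewrite !inE => H.
have jp : j != p by apply/negP => /eqP E; rewrite E tirr in tjp.
have : connect (tminus t j p) k x.
  apply: (conn_ind (P := fun x => connect (tminus t j p) k x)) H => //.
  move=> a b ca IH /andP [tab nab].
  apply: (connect_trans IH); apply: connect1; rewrite /tminus tab /=.
  have aj : a != j by apply/negP => /eqP E; subst a; rewrite inE ca in jns.
  have bj : b != j.
    apply/negP => /eqP E; subst b; move: jns; rewrite inE.
    by rewrite (connect_trans ca (connect1 (_ : tminus t k j a j))) // /tminus tab.
  by rewrite (negbTE aj) (negbTE bj) /= andbF.
apply: connect_trans; apply: connect1.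
by rewrite /tminus tjk eqxx (negbTE kp) (negbTE jp).
Qed.

Lemma side_lt (I : finType) (t : rel I) j p k :
  is_tree t -> t j p -> t j k -> k != p -> #|side t k j| < #|side t j p|.
Proof.
move=> tr tjp tjk kp; apply: proper_card; apply/properP; split.
  exact: side_sub.
exists j; first by rewrite inE connect0.
have [[tsym _] _ _ _] := tr.
by apply: side_notin => //; rewrite tsym.
Qed.

Lemma side_split (I : finType) (t : rel I) j p x :
  is_tree t -> t j p -> x \in side t j p -> x != j ->
  exists2 k, t j k && (k != p) & x \in side t k j.
Proof.
move=> tr tjp; rewrite inE => H.
have [[tsym tirr] _ _ _] := tr.
suff : x = j \/ exists2 k, t j k && (k != p) & x \in side t k j.
  by case=> // -> ; rewrite eqxx.
apply: (conn_ind (P := fun x => x = j \/ exists2 k, t j k && (k != p) & x \in side t k j)) H; first by left.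
move=> a b _ [-> | [k /andP [tjk kp] ak]] /andP [tab nab].
  right; exists b; last by rewrite inE connect0.
  rewrite tab /=; apply/negP => /eqP E; move: nab; by rewrite E !eqxx.
have [/eqP -> | bj] := boolP (b == j); first by left.
right; exists k; first by rewrite tjk kp.
have jns : j \notin side t k j by apply: side_notin => //; rewrite tsym.
have aj : a != j by apply/negP => /eqP E; subst a; rewrite ak in jns.
move: ak; rewrite !inE => ak; apply: (connect_trans ak); apply: connect1.
by rewrite /tminus tab (negbTE aj) (negbTE bj) /= andbF.
Qed.

Lemma side_split_all (I : finType) (t : rel I) j x :
  is_tree t -> x != j -> exists2 k, t j k & x \in side t k j.
Proof.
move=> tr.
have [[tsym tirr] _ conn _] := tr.
suff : x = j \/ exists2 k, t j k & x \in side t k j.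
  by case=> // -> ; rewrite eqxx.
apply: (conn_ind (P := fun x => x = j \/ exists2 k, t j k & x \in side t k j)) (conn j x); first by left.
move=> a b _ [-> | [k tjk ak]] tab.
  by right; exists b; last by rewrite inE connect0.
have [/eqP -> | bj] := boolP (b == j); first by left.
right; exists k => //.
have jns : j \notin side t k j by apply: side_notin => //; rewrite tsym.
have aj : a != j by apply/negP => /eqP E; subst a; rewrite ak in jns.
move: ak; rewrite !inE => ak; apply: (connect_trans ak); apply: connect1.
by rewrite /tminus tab (negbTE aj) (negbTE bj) /= andbF.
Qed.

Lemma side_sep (T : finType) (e : rel T) (I : finType) (t : rel I) (B : I -> {set T})
  i j v k l :
  tree_decomposition e t B -> t i j -> k \in side t i j -> l \notin side t i j ->
  v \in B k -> v \in B l -> (v \in B i) && (v \in B j).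
Proof.
case=> tr _ _ cn tij ks ls vk vl.
have := cn v k l vk vl.
move/(conn_ind (P := fun x => x \in side t i j \/ (v \in B i) && (v \in B j))).
case.
- by left.
- move=> a b _ [ain | ->] /=; last by right.
  case/and3P=> tab va vb.
  case nab : (((a == i) && (b == j)) || ((a == j) && (b == i))).
    by right; case/orP: nab => /andP [/eqP <- /eqP <-]; rewrite ?va ?vb.
  left; move: ain; rewrite !inE => ain; apply: (connect_trans ain).
  by apply: connect1; rewrite /tminus tab nab.
- by move=> H; rewrite H in ls.
- done.
Qed.

Lemma neq_edge (T : finType) (e : rel T) x y : simple_graph e -> e x y -> x != y.
Proof. by case=> _ irr exy; apply/negP => /eqP E; rewrite E irr in exy. Qed.

Lemma form (T : finType) (e : rel T) (X : {set T}) v :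
  simple_graph e -> cubic e -> #|X| = 4 -> (forall u, e v u -> u \in X) ->
  exists2 c, c \in X & forall w, e v w = (w \in X) && (w != c).
Proof.
move=> sg cub X4 HX.
have sub : [set w | e v w] \subset X by apply/subsetP => w; rewrite inE; apply: HX.
have : #|X :\: [set w | e v w]| == 1.
  by rewrite cardsD (setIidPr sub) cub X4.
case/cards1P => c Ec.
have cX : c \in X :\: [set w | e v w] by rewrite Ec set11.
exists c; first by move: cX; rewrite inE => /andP [].
move=> w; apply/idP/idP.
  move=> evw; rewrite HX //=; apply/negP => /eqP E; subst w.
  by move: cX; rewrite !inE evw.
case/andP=> wX wc; apply/negPn/negP => nevw.
have : w \in X :\: [set w | e v w] by rewrite !inE nevw wX.
by rewrite Ec inE (negbTE wc).
Qed.

Lemma card3 (T : finType) (A : {set T}) : #|A| = 3 ->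
  exists x y z, [/\ uniq [:: x; y; z], x \in A, y \in A & z \in A].
Proof.
rewrite cardE => s3.
have u := enum_uniq (mem A).
have m := mem_enum (mem A).
case: (enum (mem A)) s3 u m => [|x [|y [|z [|]]]] // _ u m.
exists x, y, z; split => //; [rewrite -(m x) | rewrite -(m y) | rewrite -(m z)];
  by rewrite !inE eqxx ?orbT.
Qed.

Lemma nbrs_other (T : finType) (e : rel T) r u : cubic e -> e r u ->
  exists q s, [/\ uniq [:: u; q; s], e r q & e r s].
Proof.
move=> cub eru.
have : #|[set w | e r w] :\ u| == 2.
  by move: (cardsD1 u [set w | e r w]); rewrite cub inE eru /= => H; apply/eqP; lia.
case/cards2P => x [y [xy E]].
have hx : x \in [set w | e r w] :\ u by rewrite E !inE eqxx.
have hy : y \in [set w | e r w] :\ u by rewrite E !inE eqxx orbT.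
move: hx hy; rewrite !inE => /andP [xu erx] /andP [yu ery].
exists x, y; split => //=.
by rewrite !inE negb_or eq_sym xu eq_sym yu /= xy.
Qed.

Lemma mkK23 (T : finType) (e : rel T) (X : {set T}) u q c :
  simple_graph e -> u != q -> c \in X -> #|X| = 4 ->
  (forall w, e u w = (w \in X) && (w != c)) ->
  (forall w, e q w = (w \in X) && (w != c)) -> has_K23 e.
Proof.
move=> sg uq cX X4 Fu Fq.
have : #|X :\ c| = 3 by move: (cardsD1 c X); rewrite X4 cX /= => H; lia.
case/card3 => y1 [y2 [y3 [un h1 h2 h3]]].
move: h1 h2 h3; rewrite !inE => /andP [n1 x1] /andP [n2 x2] /andP [n3 x3].
have eu1 : e u y1 by rewrite Fu x1 n1.
have eu2 : e u y2 by rewrite Fu x2 n2.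
have eu3 : e u y3 by rewrite Fu x3 n3.
have eq1 : e q y1 by rewrite Fq x1 n1.
have eq2 : e q y2 by rewrite Fq x2 n2.
have eq3 : e q y3 by rewrite Fq x3 n3.
exists u, q, y1, y2, y3; split; last by split; split.
move: un; rewrite /= !inE !negb_or => /and3P [-> -> _].
by rewrite uq !(neq_edge sg eu1, neq_edge sg eu2, neq_edge sg eu3,
  neq_edge sg eq1, neq_edge sg eq2, neq_edge sg eq3).
Qed.

Lemma uniq3 (T : eqType) (a b c : T) :
  uniq [:: a; b; c] -> [/\ a != b, a != c & b != c].
Proof. by rewrite /= !inE !negb_or => /and3P [/andP [-> ->] -> _]. Qed.

Lemma tri_of (T : finType) (e : rel T) a b c :
  simple_graph e -> e a b -> e b c -> e a c -> has_triangle e.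
Proof.
move=> sg eab ebc eac; exists a, b, c; split => //.
by rewrite /= !inE negb_or (neq_edge sg eab) (neq_edge sg ebc) (neq_edge sg eac).
Qed.

Lemma form_in (T : finType) (e : rel T) (X : {set T}) v :
  simple_graph e -> cubic e -> #|X| = 4 -> v \in X -> (forall u, e v u -> u \in X) ->
  forall w, e v w = (w \in X) && (w != v).
Proof.
move=> sg cub X4 vX H.
have [c cX Fv] := form sg cub X4 H.
have : e v v = false by case: sg.
rewrite Fv vX /= => /negbFE/eqP vc w.
by rewrite Fv vc.
Qed.

Lemma L2 (T : finType) (e : rel T) (X : {set T}) r z :
  simple_graph e -> cubic e -> #|X| = 4 -> r \in X -> z \in X -> e r z ->
  (forall u, e r u -> u \in X) -> (forall u, e z u -> u \in X) -> has_triangle e.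
Proof.
move=> sg cub X4 rX zX erz Hr Hz.
have Fr := form_in sg cub X4 rX Hr.
have Fz := form_in sg cub X4 zX Hz.
have : 0 < #|X :\ r :\ z|.
  move: (cardsD1 r X) (cardsD1 z (X :\ r)); rewrite X4 rX !inE zX.
  rewrite eq_sym (neq_edge sg erz) /= => H1 H2; lia.
case/card_gt0P => a; rewrite !inE => /and3P [az ar aX].
apply: (tri_of (c := a) sg erz); first by rewrite Fz aX az.
by rewrite Fr aX ar.
Qed.

Lemma L1 (T : finType) (e : rel T) (X : {set T}) r u :
  simple_graph e -> cubic e -> ~ has_triangle e -> ~ has_K23 e -> ~ has_domino e ->
  #|X| = 4 -> r \in X ->
  (forall q, e r q -> q \notin X -> forall w, e q w -> w \in X) ->
  e r u -> u \notin X -> False.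
Proof.
move=> sg cub ntri nk23 ndom X4 rX H eru uX.
have [tsym tirr] := sg.
have [c cX Fu] := form sg cub X4 (H u eru uX).
have rc : r != c by move: (Fu r); rewrite tsym eru => /esym /andP [].
have [q0 [s0 [un0 erq0 ers0]]] := nbrs_other cub eru.
have nt : forall q, e r q -> ~~ e u q.
  by move=> q erq; apply/negP => euq; apply: ntri; apply: (tri_of sg eru euq erq).
have [q [s [un erq ers qX]]] : exists q s, [/\ uniq [:: u; q; s], e r q, e r s & q \notin X].
  have [q0X | q0X] := boolP (q0 \in X); last by exists q0, s0.
  have q0c : q0 = c by move: (nt q0 erq0); rewrite Fu q0X /= => /negbNE/eqP.
  exists s0, q0; split => //.
    have [h1 h2 h3] := uniq3 un0.
    by rewrite /= !inE !negb_or h1 h2 eq_sym h3.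
  apply/negP => s0X; move: (nt s0 ers0); rewrite Fu s0X /= => /negbNE/eqP s0c.
  by have [_ _] := uniq3 un0; rewrite q0c s0c eqxx.
have [c' c'X Fq] := form sg cub X4 (H q erq qX).
have [uq us qs] := uniq3 un.
have [/eqP cc | cc] := boolP (c' == c).
  by apply: nk23; apply: (mkK23 sg uq cX X4 Fu); rewrite -cc.
have sX : s \notin X.
  apply/negP => sX.
  have /eqP sc : s == c by move: (nt s ers); rewrite Fu sX /= => /negbNE.
  have : ~~ e q s by apply/negP => eqs; apply: ntri; apply: (tri_of sg erq eqs ers).
  by rewrite Fq sX /= sc eq_sym cc.
have [c'' c''X Fs] := form sg cub X4 (H s ers sX).
have [/eqP c1 | c1] := boolP (c'' == c).
  by apply: nk23; apply: (mkK23 sg us cX X4 Fu); rewrite -c1.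
have [/eqP c2 | c2] := boolP (c'' == c').
  by apply: nk23; apply: (mkK23 sg qs c'X X4 Fq); rewrite -c2.
apply: ndom.
have rc' : r != c' by move: (Fq r); rewrite tsym erq => /esym /andP [].
have rc'' : r != c'' by move: (Fs r); rewrite tsym ers => /esym /andP [].
have neX : forall a b, a \notin X -> b \in X -> a != b.
  by move=> a b aX bX; apply/negP => /eqP E; subst a; rewrite bX in aX.
exists q, r, s, c'', u, c'; split.
  have qr : q != r by rewrite eq_sym (neq_edge sg erq).
  have qu : q != u by rewrite eq_sym.
  have su : s != u by rewrite eq_sym.
  have ru : r != u by rewrite (neq_edge sg eru).
  have rs : r != s by rewrite (neq_edge sg ers).
  have c''u : c'' != u by rewrite eq_sym (neX _ _ uX c''X).
  rewrite /= !inE !negb_or qr qs (neX _ _ qX c''X) qu (neX _ _ qX c'X).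
  rewrite rs rc'' ru rc' (neX _ _ sX c''X) su (neX _ _ sX c'X).
  by rewrite c''u c2 (neX _ _ uX c'X).
split; split.
- by rewrite tsym.
- done.
- by rewrite tsym Fu c''X c1.
- by rewrite Fu c'X cc.
- by rewrite Fq c''X c2.
- done.
- by rewrite Fs c'X eq_sym c2.
Qed.

Lemma core (T : finType) (e : rel T) (X : {set T}) (W : pred T) :
  simple_graph e -> cubic e -> ~ has_triangle e -> ~ has_K23 e -> ~ has_domino e ->
  #|X| = 4 ->
  (forall v, W v -> v \notin X -> forall u, e v u -> u \in X) ->
  (forall v, W v -> v \in X -> forall u, e v u -> (u \in X) \/ W u) ->
  forall y z, W y -> W z -> e y z -> False.
Proof.
move=> sg cub ntri nk23 ndom X4 HA HB.
have [tsym tirr] := sg.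
have HL1 : forall r u, W r -> r \in X -> e r u -> u \notin X -> False.
  move=> r u Wr rX eru uX; apply: (L1 sg cub ntri nk23 ndom X4 rX _ eru uX).
  move=> q erq qX; case: (HB r Wr rX q erq) => [qX' | Wq]; first by rewrite qX' in qX.
  exact: HA.
have key : forall r z, W r -> W z -> r \in X -> e r z -> False.
  move=> r z Wr Wz rX erz.
  have Nr : forall u, e r u -> u \in X.
    by move=> u eru; apply/negPn/negP => uX; apply: (HL1 r u).
  have zX := Nr z erz.
  have Nz : forall u, e z u -> u \in X.
    by move=> u ezu; apply/negPn/negP => uX; apply: (HL1 z u).
  by apply: ntri; apply: (L2 sg cub X4 rX zX erz).
move=> y z Wy Wz eyz.
have [yX | yX] := boolP (y \in X); first exact: (key y z).
apply: (key z y) => //; first exact: (HA y Wy yX).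
by rewrite tsym.
Qed.

Lemma pad (T : finType) (X : {set T}) n : #|X| <= n -> n <= #|T| ->
  exists2 Y : {set T}, X \subset Y & #|Y| = n.
Proof.
elim: n => [|n IH] Xn nT.
  by exists X => //; apply/eqP; rewrite -leqn0.
have [/eqP XE | Xn'] := boolP (#|X| == n.+1); first by exists X.
have [Y XY Yn] : exists2 Y : {set T}, X \subset Y & #|Y| = n.
  apply: IH; lia.
have : [set: T] :\: Y != set0.
  apply/negP => /eqP E.
  have : #|[set: T] :\: Y| = 0 by rewrite E cards0.
  rewrite cardsD setTI cardsT Yn; lia.
case/set0Pn => y; rewrite !inE andbT => yY.
exists (y |: Y); first by apply: (subset_trans XY); apply: subsetUr.
by rewrite cardsU1 yY Yn.
Qed.

Lemma core' (T : finType) (e : rel T) (X : {set T}) (W : pred T) :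
  simple_graph e -> cubic e -> ~ has_triangle e -> ~ has_K23 e -> ~ has_domino e ->
  #|X| <= 4 -> 4 <= #|T| ->
  (forall v, W v -> v \notin X -> forall u, e v u -> u \in X) ->
  (forall v, W v -> v \in X -> forall u, e v u -> (u \in X) \/ W u) ->
  forall y z, W y -> W z -> e y z -> False.
Proof.
move=> sg cub ntri nk23 ndom X4 T4 HA HB.
have [Y XY Y4] := pad X4 T4.
apply: (core sg cub ntri nk23 ndom Y4).
  move=> v Wv vY u evu; apply: (subsetP XY); apply: (HA v Wv _ u evu).
  by apply/negP => vX; rewrite (subsetP XY _ vX) in vY.
move=> v Wv vY u evu.
have [vX | vX] := boolP (v \in X).
  by case: (HB v Wv vX u evu) => [uX | Wu]; [left; apply: (subsetP XY) | right].
by left; apply: (subsetP XY); apply: (HA v Wv vX u evu).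
Qed.

Definition inside (T I : finType) (t : rel I) (B : I -> {set T}) j p v :=
  [exists k in side t j p, v \in B k] && (v \notin B p).

Lemma edge_side (T : finType) (e : rel T) (I : finType) (t : rel I) (B : I -> {set T}) j p v u :
  tree_decomposition e t B -> t j p -> inside t B j p v -> e v u ->
  exists2 m, m \in side t j p & (u \in B m) && (v \in B m).
Proof.
move=> dec tjp /andP [/existsP [k /andP [ks vk]] vp] evu.
have [_ _ cov _] := dec.
have [m /andP [vm um]] := cov v u evu.
have [ms | ms] := boolP (m \in side t j p); first by exists m; rewrite ?um ?vm.
have := side_sep dec tjp ks ms vk vm.
by rewrite (negbTE vp) andbF.
Qed.

Lemma T4 (T : finType) (e : rel T) : simple_graph e -> 0 < #|T| -> cubic e -> 4 <= #|T|.
Proof.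
move=> [_ irr] /card_gt0P [v _] cub.
have := max_card (mem (v |: [set w | e v w])).
by rewrite cardsU1 cub inE irr.
Qed.

Lemma all_benign (T : finType) (e : rel T) (I : finType) (t : rel I) (B : I -> {set T}) :
  simple_graph e -> 0 < #|T| -> cubic e ->
  ~ has_triangle e -> ~ has_K23 e -> ~ has_domino e ->
  tree_decomposition e t B -> (forall i, #|B i| <= 4) ->
  forall n j p, #|side t j p| <= n -> t j p ->
  forall v, inside t B j p v -> forall u, e v u -> u \in B p.
Proof.
move=> sg T0 cub ntri nk23 ndom dec wid.
have [tr _ _ _] := dec.
have [[tsym tirr] _ _ _] := tr.
have T4' := T4 sg T0 cub.
elim=> [|n IH] j p hn tjp.
  have : j \in side t j p by rewrite inE connect0.
  move=> js; have : 0 < #|side t j p| by apply/card_gt0P; exists j.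
  by rewrite ltnNge hn.
have pns : p \notin side t j p by apply: side_notin.
have HA : forall v, inside t B j p v -> v \notin B j -> forall u, e v u -> u \in B j.
  move=> v /andP [/existsP [k /andP [ks vk]] vp] vj u evu.
  have kj : k != j by apply/negP => /eqP E; subst k; rewrite vk in vj.
  have [k' /andP [tjk' k'p] kk'] := side_split tr tjp ks kj.
  have lt := side_lt tr tjp tjk' k'p.
  apply: (IH k' j) evu; first by lia.
    by rewrite tsym.
  by rewrite /inside vj andbT; apply/existsP; exists k; rewrite kk'.
have HB : forall v, inside t B j p v -> v \in B j -> forall u, e v u ->
    (u \in B j) \/ inside t B j p u.
  move=> v iv vj u evu.
  have [m ms /andP [um vm]] := edge_side dec tjp iv evu.
  have [up | up] := boolP (u \in B p).
    by left; have /andP [] := side_sep dec tjp ms pns um up.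
  by right; rewrite /inside up andbT; apply/existsP; exists m; rewrite ms.
have C := core' sg cub ntri nk23 ndom (wid j) T4' HA HB.
move=> v iv u evu.
have [m ms /andP [um vm]] := edge_side dec tjp iv evu.
apply/negPn/negP => up.
apply: (C v u iv _ evu).
by rewrite /inside up andbT; apply/existsP; exists m; rewrite ms.
Qed.

Theorem lemma28 (T : finType) (e : rel T) :
  simple_graph e -> 0 < #|T| -> cubic e -> treewidth_le e 3 ->
  has_triangle e \/ has_K23 e \/ has_domino e.
Proof.
move=> sg T0 cub [I [t [B [dec wid]]]].
case: (classic (has_triangle e \/ has_K23 e \/ has_domino e)) => // H.
exfalso.
have ntri : ~ has_triangle e by move=> h; apply: H; left.
have nk23 : ~ has_K23 e by move=> h; apply: H; right; left.
have ndom : ~ has_domino e by move=> h; apply: H; right; right.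
have [tr cov _ _] := dec.
have [[tsym tirr] I0 _ _] := tr.
have [j0 _] := card_gt0P I0.
have [v _] := card_gt0P T0.
have : 0 < #|[set w | e v w]| by rewrite cub.
case/card_gt0P => u; rewrite inE => evu.
apply: (@core' T e (B j0) (fun _ => true) sg cub ntri nk23 ndom (wid j0) (T4 sg T0 cub) _ _ v u isT isT evu).
  move=> x _ xj w exw.
  have [k xk] := cov x.
  have kj : k != j0 by apply/negP => /eqP E; subst k; rewrite xk in xj.
  have [k' tjk' kk'] := side_split_all tr kj.
  apply: (@all_benign T e I t B sg T0 cub ntri nk23 ndom dec wid _ k' j0 (leqnn _) _ x _ w exw).
    by rewrite tsym.
  by rewrite /inside xj andbT; apply/existsP; exists k; rewrite kk'.
by move=> *; right.
Qed.
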